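(* Let $d\ge2$ and let $\{\tau_e\}$ be i.i.d. non-negative edge weights on $\mathbb Z^d$. Fix $M>0$ and $k\in\mathbb N$. There exist constants $C>0$ and $C'\ge1$, depending only on $k$ and $d$, such that for every $e\in\mathcal E^d$, $$\mathbb P(e\text{ is }(k,M)\text{-large})\ \le\ C\,\big(\mathbb P(\tau_e\ge M/C')^{k}\big)^{d-1}.$$
   Context: $\mathcal E^d$ is the set of nearest-neighbor edges of $\mathbb Z^d$. For $e=\{a,b\}$ let $v_e$ be the endpoint of smaller $\ell^1$ norm. For $k\ge1$: ${S^e_k}'=\{z\in\mathbb Z^d:|v_e-z|_\infty=k\}$ and $S^e_k=\{\{u,w\}\in\mathcal E^d:u,w\in{S^e_k}'\}$; ${S^e_0}'$ is the set of endpoints of $e$ and $S^e_0=\{e\}$. For $u,w\in{S^e_h}'$, $T_{S^e_h}(u,w)$ is the minimum of $\sum_{e'\in\gamma}\tau_{e'}$ over self-avoiding paths $\gamma$ from $u$ to $w$ using only edges of $S^e_h$. The edge $e$ is $(k,M)$-large if for each $h=0,1,\dots,k$ there exist $u,w\in{S^e_h}'$ with $T_{S^e_h}(u,w)\ge M$. *)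

(* Defs.v *)
From HB Require Import structures.
From mathcomp Require Import all_boot all_order all_algebra.
From mathcomp Require Import all_classical all_reals all_analysis.
Set Implicit Arguments. Unset Strict Implicit. Unset Printing Implicit Defensive.
Import Order.TTheory GRing.Theory Num.Theory.
Local Open Scope classical_set_scope.
Local Open Scope ring_scope.

Definition vtx (d : nat) := {ffun 'I_d -> int}.

Definition l1norm d (x : vtx d) : nat := (\sum_(i < d) absz (x i))%N.
Definition l1dist d (x y : vtx d) : nat := (\sum_(i < d) absz (x i - y i))%N.
Definition linfdist d (x y : vtx d) : nat := (\max_(i < d) absz (x i - y i))%N.

(* An edge is stored as the ordered pair (v_e, other endpoint), where v_e is the
   endpoint of smaller l^1 norm (the two norms always differ by exactly 1). *)
Definition is_edge d (p : vtx d * vtx d) : bool :=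
  (l1dist p.1 p.2 == 1%N) && (l1norm p.1 < l1norm p.2)%N.
Definition Edge d := {p : vtx d * vtx d | is_edge p}.

Definition ve d (e : Edge d) : vtx d := (val e).1.
Definition endpoints d (e : Edge d) : seq (vtx d) := [:: (val e).1; (val e).2].

Definition edge_of d (x y : vtx d) : option (Edge d) :=
  if insub (x, y) is Some e then Some e else insub (y, x).

Definition Sv d (e : Edge d) (h : nat) : set (vtx d) :=
  if h == 0%N then [set z | z \in endpoints e]
  else [set z | linfdist (ve e) z = h].
Definition Se d (e : Edge d) (h : nat) : set (Edge d) :=
  if h == 0%N then [set e]
  else [set f | Sv e h (val f).1 /\ Sv e h (val f).2].

Definition sa_path d (A : set (Edge d)) (u w : vtx d) (gam : seq (vtx d)) : Prop :=
  [/\ head u gam = u, last u gam = w, gam != [::], uniq gam &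
      forall p, p \in zip gam (behead gam) ->
        exists2 f, edge_of p.1 p.2 = Some f & A f].

Definition path_weight d (R : realType) (tau : Edge d -> R) (gam : seq (vtx d)) : R :=
  \sum_(p <- zip gam (behead gam))
     (if edge_of p.1 p.2 is Some f then tau f else 0).

(* T_A(u, w): infimum of passage times over self-avoiding paths in A
   (+oo if there is none). *)
Definition passT d (R : realType) (A : set (Edge d)) (tau : Edge d -> R)
  (u w : vtx d) : \bar R :=
  ereal_inf [set (path_weight tau gam)%:E | gam in [set g | sa_path A u w g]].

Definition kM_large d (R : realType) (k : nat) (M : R) (tau : Edge d -> R)
  (e : Edge d) : Prop :=
  forall h : nat, (h <= k)%N ->
    exists u w, [/\ Sv e h u, Sv e h w & (M%:E <= passT (Se e h) tau u w)%E].

Definition mutually_independent {I : eqType} (dT : measure_display)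
  (T : measurableType dT) (R : realType) (P : probability T R)
  (X : I -> T -> R) : Prop :=
  forall (s : seq I) (B : I -> set R), uniq s ->
    (forall i, i \in s -> measurable (B i)) ->
    P (\bigcap_(i in [set i | i \in s]) (X i @^-1` B i)) =
    (\prod_(i <- s) P (X i @^-1` B i))%E.

Definition identically_distributed {I : Type} (dT : measure_display)
  (T : measurableType dT) (R : realType) (P : probability T R)
  (X : I -> T -> R) : Prop :=
  forall (i j : I) (B : set R), measurable B ->
    P (X i @^-1` B) = P (X j @^-1` B).

(* Main.v *)
Require Import Defs.
From HB Require Import structures.
From mathcomp Require Import all_boot all_order all_algebra.
From mathcomp Require Import all_classical all_reals all_analysis.
From mathcomp Require Import zify.
Set Implicit Arguments. Unset Strict Implicit. Unset Printing Implicit Defensive.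
Import Order.TTheory GRing.Theory Num.Theory.
Local Open Scope classical_set_scope.
Local Open Scope ring_scope.
Section Geo.
Variable d : nat.
Implicit Types (a b z v : vtx d).

Lemma vtxP a b : (forall c : 'I_d, a c = b c) -> a = b.
Proof. by move=> H; apply/ffunP. Qed.

Definition shift a (l : 'I_d) (s : int) : vtx d :=
  [ffun c => if c == l then a c + s else a c].

Lemma shiftE a l s c : shift a l s c = if c == l then a c + s else a c.
Proof. by rewrite ffunE. Qed.

Lemma shiftK a l s : shift (shift a l s) l (- s) = a.
Proof. apply/vtxP => c; rewrite !shiftE; case: eqP => // _; lia. Qed.

Lemma shiftC a l j s t : shift (shift a l s) j t = shift (shift a j t) l s.
Proof. apply/vtxP => c; rewrite !shiftE; do 2 case: eqP => //; lia. Qed.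

Lemma linf_leP v z h : reflect (forall c, (absz (v c - z c)%R <= h)%N) (linfdist v z <= h)%N.
Proof.
rewrite /linfdist; apply: (iffP idP).
  by move/bigmax_leqP => H c; exact: (H c isT).
by move=> H; apply/bigmax_leqP => c _; exact: (H c).
Qed.

Lemma linf_ge v z c : (absz (v c - z c)%R <= linfdist v z)%N.
Proof. rewrite /linfdist; exact: (leq_bigmax c). Qed.

Lemma linf_eqP v z h : (0 < h)%N ->
  linfdist v z = h <-> (forall c, (absz (v c - z c)%R <= h)%N) /\ exists c, absz (v c - z c)%R = h.
Proof.
move=> h0; split.
  move=> E; split; first by apply/linf_leP; rewrite E.
  apply: contrapT => N.
  have : (linfdist v z <= h.-1)%N.
    apply/linf_leP => c; have := linf_ge v z c; rewrite E => Hc.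
    have : absz (v c - z c)%R <> h by move=> Q; apply: N; exists c.
    lia.
  lia.
move=> [H1 [c Hc]]; apply/eqP; rewrite eqn_leq; apply/andP; split.
  exact/linf_leP.
by rewrite -Hc linf_ge.
Qed.
End Geo.
Section Edges.
Variable d : nat.
Implicit Types (a b z v : vtx d) (f : Edge d).

Lemma l1distE a b : l1dist a b = (\sum_(i < d) absz (a i - b i)%R)%N.
Proof. by []. Qed.

Lemma l1dist_sym a b : l1dist a b = l1dist b a.
Proof. rewrite !l1distE; apply: eq_bigr => i _; lia. Qed.

Lemma l1dist_shift a l s : (s = 1 \/ s = -1) -> l1dist a (shift a l s) = 1%N.
Proof.
move=> hs; rewrite l1distE (bigD1 l) //= big1 ?addn0.
  rewrite shiftE eqxx; case: hs => ->; lia.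
by move=> i /negbTE il; rewrite shiftE il; lia.
Qed.

Lemma l1norm_shift a l s : (l1norm (shift a l s) + absz (a l))%N = (l1norm a + absz (a l + s)%R)%N.
Proof.
rewrite /l1norm (bigD1 l) //= [in RHS](bigD1 l) //= shiftE eqxx.
rewrite (eq_bigr (fun i => absz (a i))); last by move=> i /negbTE il; rewrite shiftE il.
by rewrite [RHS]addnC [RHS]addnCA [LHS]addnC.
Qed.

Lemma is_edge_shift a l s : (s = 1 \/ s = -1) ->
  is_edge (a, shift a l s) \/ is_edge (shift a l s, a).
Proof.
move=> hs; rewrite /is_edge /= [l1dist (shift _ _ _) _]l1dist_sym !l1dist_shift //.
have := l1norm_shift a l s.
have : absz (a l + s)%R <> absz (a l) by case: hs => ->; lia.
move=> H1 H2.
case: (ltngtP (l1norm a) (l1norm (shift a l s))) => H; [left|right|]; try by [].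
lia.
Qed.

Lemma edge_ofP a b f : edge_of a b = Some f -> val f = (a, b) \/ val f = (b, a).
Proof.
rewrite /edge_of; case: insubP => [g _ vg [<-]|_]; first by left.
by case: insubP => // g _ vg [<-]; right.
Qed.

Lemma edge_of_val f : edge_of (val f).1 (val f).2 = Some f.
Proof.
rewrite /edge_of -surjective_pairing valK. by [].
Qed.

Lemma edge_of_ex a b : is_edge (a, b) \/ is_edge (b, a) -> exists f, edge_of a b = Some f.
Proof.
rewrite /edge_of => -[H|H]; first by exists (Sub (a, b) H); rewrite insubT.
case: insubP => [g _ _|_]; first by exists g.
by exists (Sub (b, a) H); rewrite insubT.
Qed.

Lemma is_edge_asym a b : is_edge (a, b) -> ~~ is_edge (b, a).
Proof. rewrite /is_edge /= => /andP [_ H]; apply/negP => /andP [_ H']; lia. Qed.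

Lemma edge_of_sym a b : edge_of a b = edge_of b a.
Proof.
rewrite /edge_of; case: insubP => [g ab vg|nab].
  by rewrite insubN ?insubT //; apply: is_edge_asym.
by case: insubP => [g ba vg|nba].
Qed.
End Edges.
Section Conn.
Variable T : eqType.
Variable r : rel T.
Definition conn a b := exists p, path r a p /\ last a p = b.

Lemma conn_refl a : conn a a.
Proof. by exists [::]. Qed.

Lemma conn_trans a b c : conn a b -> conn b c -> conn a c.
Proof.
move=> [p [pp lp]] [q [pq lq]]; exists (p ++ q); split.
  by rewrite cat_path pp lp pq.
by rewrite last_cat lp.
Qed.

Lemma conn_step a b : r a b -> conn a b.
Proof. by move=> rab; exists [:: b]; rewrite /= rab. Qed.

Hypothesis rsym : forall a b, r a b -> r b a.

Lemma conn_sym a b : conn a b -> conn b a.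
Proof.
move=> [p]; elim: p a => [|x p IH] a /= [pp lp]; first by rewrite -lp; apply: conn_refl.
move/andP: pp => [rax pp].
apply: (conn_trans (IH x (conj pp lp))); exact/conn_step/rsym.
Qed.

Lemma crossing (P : T -> Prop) a p : path r a p -> P a -> ~ P (last a p) ->
  exists x y, [/\ r x y, P x & ~ P y].
Proof.
elim: p a => [|y p IH] a /=; first by move=> _ H1 H2.
move=> /andP [ray pp] Pa NP.
case: (pselect (P y)) => Py; first exact: (IH y).
by exists a, y.
Qed.
End Conn.
Section Sphere.
Variable d : nat.
Hypothesis hd : (1 < d)%N.
Variable v : vtx d.
Variable h : nat.
Hypothesis hpos : (0 < h)%N.
Implicit Types (a b z : vtx d) (f : Edge d).

Definition sph z := linfdist v z == h.

Definition stepR : rel (vtx d) := fun a b =>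
  [&& [exists l, (b == shift a l 1) || (b == shift a l (-1))], sph a & sph b].

Lemma stepR_sym a b : stepR a b -> stepR b a.
Proof.
move=> /and3P [/existsP [l /orP Hl] sa sb]; apply/and3P; split => //.
apply/existsP; exists l; apply/orP.
case: Hl => /eqP ->; [right|left]; apply/eqP; rewrite shiftK //.
Qed.

Lemma sphP z : sph z <-> (forall c, (absz (v c - z c)%R <= h)%N) /\ exists c, absz (v c - z c)%R = h.
Proof. rewrite /sph; split => [/eqP /(linf_eqP _ _ hpos) //|H]; apply/eqP; exact/(linf_eqP _ _ hpos). Qed.

Definition corner : vtx d := [ffun c => v c + h%:Z].
Lemma cornerE c : corner c = v c + h%:Z. Proof. by rewrite ffunE. Qed.

Definition phi z := (\sum_(c < d) absz (v c + h%:Z - z c)%R)%N.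

Lemma phi_shift z l : z l < v l + h%:Z -> (phi (shift z l 1) + 1 = phi z)%N.
Proof.
move=> zl; rewrite /phi (bigD1 l) //= [in RHS](bigD1 l) //= shiftE eqxx.
rewrite (eq_bigr (fun i => absz (v i + h%:Z - z i)%R)); last by move=> i /negbTE il; rewrite shiftE il.
have : (absz (v l + h%:Z - (z l + 1))%R + 1 = absz (v l + h%:Z - z l)%R)%N by lia.
move=> <-. by rewrite addnAC.
Qed.

Lemma other_coord (i : 'I_d) : exists c : 'I_d, c != i.
Proof.
have h0 : (0 < d)%N by lia.
case: (eqVneq i (Ordinal h0)) => [->|ne]; last by exists (Ordinal h0); rewrite eq_sym.
by exists (Ordinal hd).
Qed.

Lemma step_corner z : sph z -> z != corner ->
  exists l, stepR z (shift z l 1) /\ (phi (shift z l 1) < phi z)%N.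
Proof.
move=> sz nzc; have [Hb [i Hi]] := (sphP z).1 sz.
have [[l [li Hl]]|N] := pselect (exists l, l != i /\ z l < v l + h%:Z).
  exists l; split; last by rewrite -(phi_shift Hl); lia.
  apply/and3P; split => //; first by apply/existsP; exists l; rewrite eqxx.
  apply/sphP; split.
    move=> c; rewrite shiftE; case: eqP => [->|_]; last exact: Hb.
    have := Hb l; lia.
  by exists i; rewrite shiftE eq_sym (negbTE li).
have Hall : forall l, l != i -> z l = v l + h%:Z.
  move=> l li; have := Hb l => Hl.
  have : ~ (z l < v l + h%:Z) by move=> H; apply: N; exists l.
  lia.
have Hzi : z i < v i + h%:Z.
  have : z i <> v i + h%:Z.
    move=> E; move/eqP: nzc; apply; apply/vtxP => c; rewrite cornerE.
    by case: (eqVneq c i) => [->|ci] //; apply: Hall.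
  have := Hb i; lia.
have [c ci] := other_coord i.
exists i; split; last by rewrite -(phi_shift Hzi); lia.
apply/and3P; split => //; first by apply/existsP; exists i; rewrite eqxx.
apply/sphP; split.
  move=> c'; rewrite shiftE; case: eqP => [->|_]; last exact: Hb.
  have := Hb i; lia.
exists c; rewrite shiftE (negbTE ci) Hall //; lia.
Qed.

Lemma conn_corner z : sph z -> conn stepR z corner.
Proof.
move: {2}(phi z) (leqnn (phi z)) => n; elim: n z => [|n IH] z Hn sz.
  case: (eqVneq z corner) => [->|nzc]; first exact: conn_refl.
  have [l [_ H]] := step_corner sz nzc; lia.
case: (eqVneq z corner) => [->|nzc]; first exact: conn_refl.
have [l [st H]] := step_corner sz nzc.
apply: (conn_trans (conn_step st)); apply: IH; first lia.
by move/and3P: st => [].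
Qed.

Lemma sph_conn u w : sph u -> sph w -> conn stepR u w.
Proof.
move=> su sw; apply: (conn_trans (conn_corner su)).
apply: conn_sym; [exact: stepR_sym | exact: conn_corner].
Qed.
End Sphere.
Section Ends.
Variable d : nat.
Implicit Types (z : vtx d) (f : Edge d).
Lemma ends_of p q f : edge_of p q = Some f -> forall z, z \in endpoints f -> z = p \/ z = q.
Proof.
move/edge_ofP; rewrite /endpoints => -[->|->] z; rewrite !inE => /orP [] /eqP ->; by [left|right].
Qed.

Lemma ends_of1 p q f : edge_of p q = Some f -> p \in endpoints f.
Proof. by move/edge_ofP; rewrite /endpoints => -[->|->]; rewrite !inE eqxx ?orbT. Qed.

Lemma ends_of2 p q f : edge_of p q = Some f -> q \in endpoints f.
Proof. by move/edge_ofP; rewrite /endpoints => -[->|->]; rewrite !inE eqxx ?orbT. Qed.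

End Ends.

Section Light.
Variable R : realType.
Variable d : nat.
Hypothesis hd : (1 < d)%N.
Variable e : Edge d.
Let v := ve e.
Variable h : nat.
Hypothesis hpos : (0 < h)%N.
Variable wt : Edge d -> R.
Variable t : R.
Variable u : vtx d.
Implicit Types (a b z y : vtx d) (f : Edge d).

Definition lightR : rel (vtx d) := fun a b =>
  stepR v h a b && (if edge_of a b is Some f then wt f < t else false).

Definition K z := conn lightR u z.

Lemma step_edge a b : stepR v h a b -> exists f, edge_of a b = Some f /\ Se e h f.
Proof.
move=> /and3P [/existsP [l /orP Hl] sa sb].
have [f Hf] : exists f, edge_of a b = Some f.
  apply: edge_of_ex; by case: Hl => /eqP ->; apply: is_edge_shift; [left|right].
exists f; split => //.
have h0 : (h == 0%N) = false by case: h hpos.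
rewrite /Se h0 /= /Sv h0 /=.
by case: (edge_ofP Hf) => ->; split => /=; apply/eqP.
Qed.

Lemma heavy a b : K a -> stepR v h a b -> ~ K b ->
  exists f, [/\ edge_of a b = Some f, Se e h f & t <= wt f].
Proof.
move=> Ka sab NKb; have [f [Hf Sf]] := step_edge sab.
exists f; split => //; rewrite leNgt; apply/negP => wf.
apply: NKb; apply: (conn_trans Ka); apply: conn_step.
by rewrite /lightR sab Hf.
Qed.

Lemma find_i a j s : (s = 1 \/ s = -1) -> sph v h a -> sph v h (shift a j s) ->
  exists i, i != j /\ absz (v i - a i)%R = h.
Proof.
move=> hs sa sb.
have [_ [i Hi]] := (sphP v hpos (shift a j s)).1 sb.
case: (eqVneq i j) => [eij|nij]; last by exists i; split => //; move: Hi; rewrite shiftE (negbTE nij).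
have [_ [i' Hi']] := (sphP v hpos a).1 sa.
case: (eqVneq i' j) => [eij'|nij']; last by exists i'.
move: Hi Hi'; rewrite eij eij' shiftE eqxx; case: hs => -> ; lia.
Qed.

End Light.
Section Square.
Variable R : realType.
Variable d : nat.
Hypothesis hd : (1 < d)%N.
Variable e : Edge d.
Let v := ve e.
Variable h : nat.
Hypothesis hpos : (0 < h)%N.
Variable wt : Edge d -> R.
Variable t : R.
Variable u : vtx d.
Implicit Types (z y : vtx d) (f : Edge d).
Variables (a : vtx d) (j : 'I_d) (s : int).
Hypothesis hs : s = 1 \/ s = -1.
Let b := shift a j s.
Hypothesis sa : sph v h a.
Hypothesis sb : sph v h b.
Hypothesis Ka : K e h wt t u a.
Hypothesis NKb : ~ K e h wt t u b.
Variable i : 'I_d.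
Hypothesis nij : i != j.
Hypothesis Hi : absz (v i - a i)%R = h.

Definition sqprop (l : 'I_d) f :=
  [/\ Se e h f, t <= wt f,
     (forall z, z \in endpoints f -> forall c, c != l -> c != j -> z c = a c) &
     (exists2 z, z \in endpoints f & z l != a l)].

Lemma square (l : 'I_d) : l != i -> l != j -> exists f, sqprop l f.
Proof.
move=> li lj.
have [Hba _] := (sphP v hpos a).1 sa.
have [Hbb _] := (sphP v hpos b).1 sb.
pose sg : int := if a l - v l < h%:Z then 1 else -1.
have Hsg : (absz (v l - (a l + sg))%R <= h)%N.
  have := Hba l; rewrite /sg; case: ifP => H; lia.
have sg0 : sg != 0 by rewrite /sg; case: ifP.
have bl : b l = a l by rewrite /b shiftE (negbTE lj).
have bi : b i = a i by rewrite /b shiftE (negbTE nij).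
pose y := shift a l sg.
pose y' := shift b l sg.
have hsg : sg = 1 \/ sg = -1 by rewrite /sg; case: ifP; [left|right].
have sy : sph v h y.
  apply/(sphP v hpos); split; last by exists i; rewrite /y shiftE eq_sym (negbTE li).
  move=> c; rewrite /y shiftE; case: (eqVneq c l) => [->|_]; [exact: Hsg | exact: Hba].
have sy' : sph v h y'.
  apply/(sphP v hpos); split; last by exists i; rewrite /y' shiftE eq_sym (negbTE li) bi.
  move=> c; rewrite /y' shiftE; case: (eqVneq c l) => [->|_]; [rewrite bl; exact: Hsg | exact: Hbb].
have st1 : stepR v h a y.
  apply/and3P; split => //; apply/existsP; exists l; rewrite /y.
  by case: hsg => ->; rewrite eqxx ?orbT.
have st2 : stepR v h y y'.
  apply/and3P; split => //; apply/existsP; exists j; rewrite /y' /b /y shiftC.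
  by case: hs => ->; rewrite eqxx ?orbT.
have st3 : stepR v h y' b.
  apply: stepR_sym; apply/and3P; split => //; apply/existsP; exists l; rewrite /y'.
  by case: hsg => ->; rewrite eqxx ?orbT.
have yc : forall c, c != l -> y c = a c by move=> c cl; rewrite /y shiftE (negbTE cl).
have y'c : forall c, c != l -> c != j -> y' c = a c.
  by move=> c cl cj; rewrite /y' shiftE (negbTE cl) /b shiftE (negbTE cj).
have bc : forall c, c != j -> b c = a c by move=> c cj; rewrite /b shiftE (negbTE cj).
have yl : y l != a l by rewrite /y shiftE eqxx; move: sg0; apply: contra => /eqP; lia.
have y'l : y' l != a l by rewrite /y' shiftE eqxx bl; move: sg0; apply: contra => /eqP; lia.
case: (pselect (K e h wt t u y')) => Ky'.
  have [f [Hf Sf wf]] := heavy hpos Ky' st3 NKb.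
  exists f; split => //; last by exists y' => //; exact: ends_of1 Hf.
  move=> z /(ends_of Hf) [] -> c cl cj; [exact: y'c | exact: bc].
case: (pselect (K e h wt t u y)) => Ky.
  have [f [Hf Sf wf]] := heavy hpos Ky st2 Ky'.
  exists f; split => //; last by exists y => //; exact: ends_of1 Hf.
  move=> z /(ends_of Hf) [] -> c cl cj; [exact: yc | exact: y'c].
have [f [Hf Sf wf]] := heavy hpos Ka st1 Ky.
exists f; split => //; last by exists y => //; exact: ends_of2 Hf.
move=> z /(ends_of Hf) [] -> c cl cj; [by [] | exact: yc].
Qed.


Definition lprop (ls : seq 'I_d) f :=
  [/\ Se e h f, t <= wt f,
     (forall z, z \in endpoints f -> forall c, c \notin ls -> c != j -> z c = a c) &
     (exists2 z, z \in endpoints f & exists2 l, l \in ls & z l != a l)].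

Lemma squares (ls : seq 'I_d) : uniq ls -> (forall l, l \in ls -> l != i /\ l != j) ->
  exists Fs : seq (Edge d), [/\ size Fs = size ls, uniq Fs & forall f, f \in Fs -> lprop ls f].
Proof.
elim: ls => [|l ls IH]; first by move=> _ _; exists [::].
move=> /= /andP [lnin uls] Hls.
have [Fs [sz uF HF]] := IH uls (fun l' H => Hls l' (mem_behead (s:=l :: ls) H)).
have [li lj] := Hls l (mem_head _ _).
have [f [Sf wf Ef [z zf zl]]] := square li lj.
exists (f :: Fs); split => /=; first by rewrite sz.
  rewrite uF andbT; apply/negP => fF.
  have [_ _ Eg _] := HF f fF.
  by move: zl; rewrite (Eg z zf l lnin lj) eqxx.
move=> g; rewrite inE => /orP [/eqP ->|gF].
  split => //; last by exists z => //; exists l; rewrite ?mem_head.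
  move=> z' z'f c; rewrite inE negb_or => /andP [cl _] cj; exact: Ef.
have [Sg wg Eg [z' z'g [l' l'in z'l]]] := HF g gF.
split => //; last by exists z' => //; exists l'; rewrite // inE l'in orbT.
move=> z'' z''g c; rewrite inE negb_or => /andP [_ cls] cj; exact: Eg.
Qed.

End Square.
Lemma size_others d (i j : 'I_d) : i != j ->
  size [seq c <- enum 'I_d | (c != i) && (c != j)] = (d - 2)%N.
Proof.
move=> ij; rewrite size_filter.
have H1 := count_predC (fun c => (c != i) && (c != j)) (enum 'I_d).
have H2 := count_predUI (pred1 i) (pred1 j) (enum 'I_d).
rewrite !count_uniq_mem ?enum_uniq // !mem_enum /= in H2.
have E1 : count (predI (pred1 i) (pred1 j)) (enum 'I_d) = 0%N.
  apply/eqP; rewrite -leqn0 leqNgt -has_count; apply/hasPn => c _ /=.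
  by apply/negP => /andP [/eqP -> /eqP E]; move/eqP: ij.
have E2 : count (predC (fun c => (c != i) && (c != j))) (enum 'I_d) = count (predU (pred1 i) (pred1 j)) (enum 'I_d).
  by apply: eq_count => c /=; rewrite negb_and !negbK.
rewrite size_enum_ord in H1. rewrite E1 E2 in H1 H2 *. rewrite addn0 in H2; rewrite H2 in H1; by rewrite -[X in _ = (X - 2)%N]H1 addnK.
Qed.

Section SphList.
Variable R : realType.
Variable d : nat.
Hypothesis hd : (1 < d)%N.
Variable e : Edge d.
Let v := ve e.
Variable h : nat.
Hypothesis hpos : (0 < h)%N.
Variable wt : Edge d -> R.
Variable t : R.
Variables u w : vtx d.
Hypothesis su : sph v h u.
Hypothesis sw : sph v h w.
Hypothesis NKw : ~ K e h wt t u w.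

Lemma sphere_list : exists L : seq (Edge d),
  [/\ size L = (d - 1)%N, uniq L & forall f, f \in L -> Se e h f /\ t <= wt f].
Proof.
have [p [pp lp]] := sph_conn hd hpos su sw.
have [a [b [sab Ka NKb]]] : exists a b, [/\ stepR v h a b, K e h wt t u a & ~ K e h wt t u b].
  apply: (crossing (P := K e h wt t u) pp); first exact: conn_refl.
  by rewrite lp.
have [f0 [Hf0 Sf0 wf0]] := heavy hpos Ka sab NKb.
move: (sab) => /and3P [/existsP [j /orP Hj] sa sb].
have [s [hs Eb]] : exists s : int, (s = 1 \/ s = -1) /\ b = shift a j s.
  by case: Hj => /eqP ->; [exists 1; split; [left|] | exists (-1); split; [right|]].
subst b.
have [i [nij Hi]] := find_i hd hpos hs sa sb.
pose ls := [seq c <- enum 'I_d | (c != i) && (c != j)].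
have [Fs [sz uF HF]] := @squares R d hd e h hpos wt t u a j s hs sa sb Ka NKb i nij Hi ls
   (filter_uniq _ (enum_uniq _))
   (fun l H => ltac:(move: H; rewrite mem_filter => /andP [/andP [? ?] _]; done)).
exists (f0 :: Fs); split.
- by rewrite /= sz size_others //; lia.
- rewrite /= uF andbT; apply/negP => fF.
  have [_ _ _ [z zf [l lin zl]]] := HF f0 fF.
  move: lin; rewrite mem_filter => /andP [/andP [_ lj] _].
  case: (ends_of Hf0 zf) => Ez; move: zl; rewrite Ez ?eqxx // shiftE (negbTE lj) eqxx //.
- move=> f; rewrite inE => /orP [/eqP ->|fF] //.
  by have [] := HF f fF.
Qed.
End SphList.
Lemma path_zip (T : eqType) (r : rel T) x p : path r x p ->
  forall q, q \in zip (x :: p) p -> r q.1 q.2.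
Proof.
elim: p x => [|y p IH] x //= /andP [rxy pp] q; rewrite inE => /orP [/eqP -> //|].
exact: IH.
Qed.

Lemma sum_le_size (R : realType) (T : eqType) (l : seq T) (F : T -> R) (t : R) :
  (forall q, q \in l -> F q <= t) -> \sum_(q <- l) F q <= (size l)%:R * t.
Proof.
elim: l => [|x l IH] H; first by rewrite big_nil mul0r.
rewrite big_cons /= -add1n natrD mulrDl mul1r; apply: lerD; first by apply: H; rewrite mem_head.
by apply: IH => q ql; apply: H; rewrite inE ql orbT.
Qed.

Section Box.
Variable d : nat.
Variable v : vtx d.
Variable k : nat.

Definition off (z : vtx d) : {ffun 'I_d -> 'I_(k.*2).+1} :=
  [ffun c => inord (absz (z c - v c + k%:Z)%R)].

Lemma off_inj a b : (linfdist v a <= k)%N -> (linfdist v b <= k)%N -> off a = off b -> a = b.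
Proof.
move=> /linf_leP Ha /linf_leP Hb E; apply/vtxP => c.
have := congr1 (fun g : {ffun 'I_d -> 'I_(k.*2).+1} => val (g c)) E; rewrite /off !ffunE /= !inordK.
- have := Ha c; have := Hb c; lia.
- have := Hb c; lia.
- have := Ha c; lia.
Qed.

Lemma box_size (s : seq (vtx d)) : uniq s -> (forall z, z \in s -> (linfdist v z <= k)%N) ->
  (size s <= (k.*2).+1 ^ d)%N.
Proof.
move=> us Hs.
have um : uniq (map off s).
  rewrite map_inj_in_uniq // => a b aS bS; apply: off_inj; [exact: Hs | exact: Hs].
rewrite -(size_map off) -(card_uniqP um).
have := max_card (mem (map off s)); by rewrite card_ffun !card_ord.
Qed.
End Box.
Section Passage.
Variable R : realType.
Variable d : nat.
Variable e : Edge d.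
Let v := ve e.
Variable h : nat.
Hypothesis hpos : (0 < h)%N.
Variable k : nat.
Hypothesis hk : (h <= k)%N.
Variable wt : Edge d -> R.
Variable t : R.
Variables u w : vtx d.
Hypothesis su : sph v h u.
Hypothesis ht : 0 <= t.

Lemma light_sph x p : path (lightR e h wt t) x p -> forall z, z \in p -> sph v h z.
Proof.
elim: p x => [|y p IH] x //= /andP [/andP [/and3P [_ _ sy] _] pp] z.
rewrite inE => /orP [/eqP -> //|zp]; exact: (IH y pp z zp).
Qed.

Lemma light_passT : K e h wt t u w ->
  (passT (Se e h) wt u w <= (((k.*2).+1 ^ d).-1%:R * t)%:E)%E.
Proof.
move=> [p [pp lp]].
rewrite -lp; case: (shortenP pp) => p' pp' up' sub'.
pose gam := u :: p'.
have zipE : forall q, q \in zip gam (behead gam) -> lightR e h wt t q.1 q.2.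
  exact: path_zip pp'.
have sag : sa_path (Se e h) u (last u p') gam.
  split => //; move=> q /zipE /andP [st Hq].
  have [f [Hf Sf]] := step_edge hpos st.
  by exists f.
apply: (le_trans (ereal_inf_lbound _)); first by exists gam.
rewrite lee_fin /path_weight.
have szg : (size gam <= (k.*2).+1 ^ d)%N.
  apply: (@box_size d v) => // z; rewrite inE => /orP [/eqP ->|zp].
    by move: su; rewrite /sph => /eqP ->.
  by have := light_sph pp (sub' _ zp); rewrite /sph => /eqP ->.
apply: (le_trans (sum_le_size (t := t) _)).
  move=> q /zipE /andP [_]; case: (edge_of q.1 q.2) => // f; exact: ltW.
rewrite size_zip /=.
have -> : minn (size p').+1 (size p') = size p' by lia.
rewrite ler_wpM2r // ler_nat; move: szg; rewrite /gam /=; move=> H; rewrite -ltnS prednK //; exact: (leq_ltn_trans (leq0n _) H).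
Qed.
End Passage.
Section Assemble.
Variable R : realType.
Variable d : nat.
Hypothesis hd : (1 < d)%N.
Variable e : Edge d.
Let v := ve e.
Variable k : nat.
Variable M : R.
Hypothesis M0 : 0 < M.
Variable wt : Edge d -> R.
Let N := ((k.*2).+1 ^ d)%N.
Let t := M / N%:R.

Lemma N0 : (0 < N)%N.
Proof. by rewrite /N expn_gt0. Qed.

Lemma t0 : 0 < t.
Proof. by rewrite /t divr_gt0 // ltr0n N0. Qed.

Lemma Se_h h f : (0 < h)%N -> Se e h f -> linfdist v (val f).1 = h /\ linfdist v (val f).2 = h.
Proof. by case: h => // h _; rewrite /Se /Sv /=. Qed.

Lemma one_sphere h : (0 < h)%N -> (h <= k)%N ->
  (exists u w, [/\ Sv e h u, Sv e h w & (M%:E <= passT (Se e h) wt u w)%E]) ->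
  exists L : seq (Edge d),
  [/\ size L = (d - 1)%N, uniq L & forall f, f \in L -> Se e h f /\ t <= wt f].
Proof.
move=> h0 hk [u [w [Su Sw Mp]]].
have h0' : (h == 0%N) = false by case: h h0 {hk Su Sw Mp}.
have su : sph v h u by move: Su; rewrite /Sv h0' /= /sph => ->.
have sw : sph v h w by move: Sw; rewrite /Sv h0' /= /sph => ->.
apply: (sphere_list hd h0 su sw) => Kw.
have := light_passT h0 hk su (ltW t0) Kw.
move=> H; have := le_trans Mp H; rewrite lee_fin /t.
have Np : (0 < N%:R :> R) by rewrite ltr0n N0.
rewrite mulrA ler_pdivlMr // => H2.
have : (N%:R * M <= N.-1%:R * M :> R) by rewrite mulrC.
rewrite ler_pM2r // ler_nat; have := N0; lia.
Qed.

Lemma large_list : kM_large k M wt e ->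
  exists L : seq (Edge d), [/\ size L = (k * (d - 1))%N, uniq L &
    forall f, f \in L -> t <= wt f /\ exists2 h, (0 < h <= k)%N & Se e h f].
Proof.
move=> Hl.
suff : forall n, (n <= k)%N -> exists L : seq (Edge d), [/\ size L = (n * (d - 1))%N, uniq L &
    forall f, f \in L -> t <= wt f /\ exists2 h, (0 < h <= n)%N & Se e h f].
  by apply.
elim=> [|n IH] nk; first by exists [::].
have [L [sL uL HL]] := IH (ltnW nk).
have [L' [sL' uL' HL']] := one_sphere (ltn0Sn n) nk (Hl n.+1 nk).
exists (L ++ L'); split.
- by rewrite size_cat sL sL' mulSn addnC.
- rewrite cat_uniq uL uL' andbT /=; apply/hasPn => f fL'; apply/negP => fL.
  have [_ [h /andP [h0 hn] Sf]] := HL f fL.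
  have [Sf' _] := HL' f fL'.
  have [E1 _] := Se_h h0 Sf; have [E2 _] := Se_h (ltn0Sn n) Sf'.
  lia.
- move=> f; rewrite mem_cat => /orP [fL|fL'].
    have [wf [h /andP [h0 hn] Sf]] := HL f fL; split => //; exists h => //; lia.
  have [Sf wf] := HL' f fL'; split => //; by exists n.+1 => //; rewrite ltn0Sn leqnn.
Qed.
End Assemble.
Section Prob.
Variable R : realType.
Variable d : nat.
Variables (dT : measure_display) (T : measurableType dT) (P : probability T R).
Variable tau : Edge d -> T -> R.
Hypothesis mtau : forall f, measurable_fun setT (tau f).
Hypothesis idist : identically_distributed P tau.
Hypothesis indep : mutually_independent P tau.
Variable t : R.
Variable e : Edge d.

Let B : set R := [set r | t <= r].
Lemma mB : measurable B.
Proof.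
have -> : B = [set` `[t, +oo[%R] by apply/seteqP; split => x; rewrite /= in_itv /= andbT.
exact: measurable_itv.
Qed.

Lemma mH f : measurable (tau f @^-1` B).
Proof. by have := mtau f measurableT mB; rewrite setTI. Qed.

Definition Aev (s : seq (Edge d)) : set T :=
  if uniq s then \bigcap_(f in [set f | f \in s]) (tau f @^-1` B) else set0.

Lemma mAev s : measurable (Aev s).
Proof.
rewrite /Aev; case: ifP => _ //.
apply: fin_bigcap_measurable; first exact: finite_seq.
by move=> f _; exact: mH.
Qed.

Lemma PAev s : (P (Aev s) <= (P [set x | (t <= tau e x)%R]) ^+ (size s))%E.
Proof.
rewrite /Aev; case: ifP => us; last by rewrite measure0 expe_ge0.
rewrite (indep (B := fun _ => B) us); last by move=> *; exact: mB.
rewrite (eq_bigr (fun _ => P [set x | (t <= tau e x)%R])); last first.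
  by move=> f _; rewrite (idist f e) //; exact: mB.
by rewrite big_const_seq count_predT iter_mule mule1.
Qed.
End Prob.
Section Meas.
Variable R : realType.
Variables (dT : measure_display) (T : measurableType dT).

Lemma meas_exists (U : countType) (F : U -> set T) :
  (forall u, measurable (F u)) -> measurable [set x | exists u, F u x].
Proof.
move=> mF; have -> : [set x | exists u, F u x] = \bigcup_u F u.
  apply/seteqP; split => x /=; [move=> [u Hu]; by exists u | move=> [u _ Hu]; by exists u].
exact: countable_bigcupT_measurable.
Qed.

Lemma meas_forall (U : countType) (F : U -> set T) :
  (forall u, measurable (F u)) -> measurable [set x | forall u, F u x].
Proof.
move=> mF; have -> : [set x | forall u, F u x] = ~` [set x | exists u, (~` F u) x].
  apply/seteqP; split => x /=.
    by move=> H [u Hu]; apply: Hu; apply: H.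
  by move=> H u; apply: contrapT => Hu; apply: H; exists u.
by apply: measurableC; apply: meas_exists => u; apply: measurableC.
Qed.

Lemma meas_if (Q : Prop) (A : set T) : (Q -> measurable A) -> measurable [set x | Q /\ A x].
Proof.
case: (pselect Q) => q H.
  have -> : [set x | Q /\ A x] = A.
    by apply/seteqP; split => x /=; [case | move=> Ax; split].
  exact: H.
have -> : [set x | Q /\ A x] = set0.
  by apply/seteqP; split => x /=; [case | case].
exact: measurable0.
Qed.

Lemma meas_imp (Q : Prop) (A : set T) : (Q -> measurable A) -> measurable [set x | Q -> A x].
Proof.
case: (pselect Q) => q H.
  have -> : [set x | Q -> A x] = A.
    by apply/seteqP; split => x /=; [apply | move=> Ax _].
  exact: H.
have -> : [set x | Q -> A x] = setT.
  by apply/seteqP; split => x /= //.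
exact: measurableT.
Qed.

Variable d : nat.
Variable tau : Edge d -> T -> R.
Hypothesis mtau : forall f, measurable_fun setT (tau f).

Lemma meas_pw (gam : seq (vtx d)) (M : R) :
  measurable [set x | M <= path_weight (fun f => tau f x) gam].
Proof.
have mf : measurable_fun setT (fun x => path_weight (fun f => tau f x) gam).
  rewrite /path_weight; apply: measurable_sum => q.
  case: (edge_of q.1 q.2) => [f|]; [exact: mtau | exact: measurable_cst].
have := mf measurableT [set r | M <= r]; rewrite setTI; apply.
have -> : [set r | M <= r] = [set` `[M, +oo[%R] by apply/seteqP; split => r; rewrite /= in_itv /= andbT.
exact: measurable_itv.
Qed.

Lemma meas_passT (A : set (Edge d)) (u w : vtx d) (M : R) :
  measurable [set x | (M%:E <= passT A (fun f => tau f x) u w)%E].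
Proof.
have -> : [set x | (M%:E <= passT A (fun f => tau f x) u w)%E] =
  [set x | forall gam : seq (vtx d), sa_path A u w gam -> M <= path_weight (fun f => tau f x) gam].
  apply/seteqP; split => x /=.
    move=> H gam sg; rewrite -lee_fin; apply: (le_trans H); apply: ereal_inf_lbound.
    by exists gam.
  move=> H; apply: le_ereal_inf_tmp => _ [gam sg <-]; rewrite lee_fin; exact: H.
apply: meas_forall => gam; apply: meas_imp => _; exact: meas_pw.
Qed.

Lemma meas_large (k : nat) (M : R) (e : Edge d) :
  measurable [set x | kM_large k M (fun f => tau f x) e].
Proof.
rewrite /kM_large; apply: meas_forall => h; apply: meas_imp => _.
have H : measurable [set x | exists uw : vtx d * vtx d, (Sv e h uw.1 /\ Sv e h uw.2) /\
       (M%:E <= passT (Se e h) (fun f => tau f x) uw.1 uw.2)%E].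
  apply: meas_exists => uw; apply: meas_if => _; exact: meas_passT.
move: H; congr (measurable _); apply/seteqP; split => x /=.
  by move=> [[u w] [[H1 H2] H3]]; exists u, w.
by move=> [u [w [H1 H2 H3]]]; exists (u, w).
Qed.
End Meas.
Lemma expeD (R : realType) (x : \bar R) a b : (x ^+ (a + b) = x ^+ a * x ^+ b)%E.
Proof.
elim: a => [|a IH]; first by rewrite add0n expe0 mul1e.
by rewrite addSn !expeS IH muleA.
Qed.

Lemma expeM (R : realType) (x : \bar R) a b : (x ^+ (a * b) = (x ^+ a) ^+ b)%E.
Proof.
elim: b => [|b IH]; first by rewrite muln0 !expe0.
by rewrite mulnS expeD IH expeS.
Qed.

Definition unoff d (v : vtx d) k (o : {ffun 'I_d -> 'I_(k.*2).+1}) : vtx d :=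
  [ffun c => v c + (o c : nat)%:Z - k%:Z].

Lemma unoffK d (v : vtx d) k z : (linfdist v z <= k)%N -> unoff v (off v k z) = z.
Proof.
move=> /linf_leP H; apply/vtxP => c; rewrite /unoff /off !ffunE inordK.
  by have := H c; lia.
by have := H c; lia.
Qed.

Lemma pmap_idx (A B : eqType) (g : A -> option B) (idx : B -> A) (L : seq B) :
  (forall f, f \in L -> g (idx f) = Some f) -> pmap g (map idx L) = L.
Proof.
elim: L => [|f L IH] //= H; rewrite (H f (mem_head _ _)) /= IH // => f' f'L.
by apply: H; rewrite inE f'L orbT.
Qed.
Unset Implicit Arguments.
Theorem lemma3p2 (R : realType) (d k : nat) (hd : (2 <= d)%N) :
  exists C C' : R, 0 < C /\ 1 <= C' /\
  forall (dT : measure_display) (T : measurableType dT) (P : probability T R)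
         (tau : Edge d -> T -> R),
    (forall e, measurable_fun setT (tau e)) ->
    (forall e x, 0 <= tau e x) ->
    identically_distributed P tau ->
    mutually_independent P tau ->
    forall M : R, 0 < M ->
    forall e : Edge d,
      (P [set x | kM_large k M (fun f => tau f x) e]
        <= C%:E * ((P [set x | (M / C' <= tau e x)%R]) ^+ k) ^+ (d - 1))%E.
Proof.
pose O := {ffun 'I_d -> 'I_(k.*2).+1}.
pose I := (O * O)%type.
pose m := (k * (d - 1))%N.
pose J := (m.-tuple I)%type.
pose n := #|{: J}|.
have n0 : (0 < n)%N.
  by rewrite /n card_tuple card_prod card_ffun !card_ord expn_gt0 muln_gt0 expn_gt0.
exists n%:R, ((k.*2).+1 ^ d)%N%:R; split; first by rewrite ltr0n.
split; first by rewrite ler1n expn_gt0.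
move=> dT T P tau mtau tau0 idist indep M M0 e.
set t := M / _.
pose v := ve e.
pose g (o : I) : option (Edge d) := edge_of (unoff v o.1) (unoff v o.2).
pose o0 : O := [ffun _ => ord0].
pose j0 : J := [tuple of nseq m (o0, o0)].
pose en := enum {: J}.
pose A (i : nat) : set T :=
  let s := pmap g (nth j0 en i) in if size s == m then Aev tau t s else set0.
have mA : forall i, measurable (A i).
  by move=> i; rewrite /A /=; case: ifP => _; [exact: mAev | exact: measurable0].
pose p := P [set x | (t <= tau e x)%R].
have PA : forall i, (P (A i) <= p ^+ m)%E.
  move=> i; rewrite /A /=; case: ifP => [/eqP sz|_].
    by have := PAev idist indep t e (pmap g (nth j0 en i)); rewrite sz.
  by rewrite measure0; apply: expe_ge0; apply: measure_ge0.
have sub : [set x | kM_large k M (fun f => tau f x) e] `<=` \big[setU/set0]_(i < n) A i.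
  move=> x /= Hl.
  have [L [sL uL HL]] := large_list hd M0 Hl.
  pose idx (f : Edge d) : I := (off v k (val f).1, off v k (val f).2).
  have szj : size (map idx L) == m by rewrite size_map sL.
  pose j : J := Tuple szj.
  have pj : pmap g j = L.
    apply: pmap_idx => f fL.
    have [_ [h /andP [h0 hk] Sf]] := HL f fL.
    have [E1 E2] := Se_h h0 Sf.
    rewrite /g /idx /= !unoffK; first exact: edge_of_val.
    - by rewrite E2.
    - by rewrite E1.
  rewrite -bigcup_mkord; exists (index j en).
    suff H : (index j en < n)%N by exact: H.
    by rewrite /n cardE /en index_mem mem_enum.
  rewrite /A /= nth_index ?mem_enum // pj sL eqxx /Aev uL.
  move=> f /= fL; exact: (HL f fL).1.
apply: (le_trans (le_measure _ _ _ sub)).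
- by rewrite inE; exact: meas_large.
- by rewrite inE; apply: bigsetU_measurable => i _; exact: mA.
apply: (le_trans (Boole_inequality _ (fun i _ => mA i))).
apply: (@le_trans _ _ (\sum_(i < n) (p ^+ m)%E)%R).
  by apply: lee_sum => i _; exact: PA.
rewrite sumr_const card_ord mule_natl -expeM.
exact: lexx.
Qed.
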